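(* Let $C$ be a locally connected topos with final object $Z$. Then $C$ is connected if and only if there is a connected topological covering family $(X_i)_{i\in I}$ of $C$ such that for every object $X$ of $C$ and every $i\in I$ there is a path $(i_1=i,i_2,\dots,i_n)$ of $(X_i)_{i\in I}$ such that $X_{i_n}\times_Z X$ is not the initial object.
   Context: $C$ is a topos (endowed with its canonical topology) with final object $Z$. $C$ is connected if there is no covering family $\{S_1,S_2\}$ of $C$ with $S_1\times_Z S_2$ the initial (empty) object. A topological covering family $(X_i)_{i\in I}$ is connected if each topos $C_{X_i}$ (the category of objects over $X_i$) is connected. $C$ is locally connected if for every covering family $(X_i)_{i\in I}$ there is a connected covering family $(Y_j)_{j\in J}$ such that each $Y_j$ is a subobject of some $X_{k(j)}$. A path of a connected covering family $(X_i)_{i\in I}$ is a finite sequence of indices $(i_1,\dots,i_n)$ such that $X_{i_k}\times_Z X_{i_{k+1}}$ is not the initial object for each $k<n$. *)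

(* Defs.v *)
From Stdlib Require Import List.
Set Implicit Arguments.

Record Category := {
  ob :> Type;
  hom : ob -> ob -> Type;
  idm : forall A, hom A A;
  comp : forall A B D, hom A B -> hom B D -> hom A D;
  comp_idl : forall A B (f : hom A B), comp (idm A) f = f;
  comp_idr : forall A B (f : hom A B), comp f (idm B) = f;
  comp_assoc : forall A B D E (f : hom A B) (g : hom B D) (h : hom D E),
      comp (comp f g) h = comp f (comp g h)
}.
Arguments hom {c} _ _.
Arguments idm {c} _.
Arguments comp {c A B D} _ _.
(* diagrammatic composition: f ≫ g is "first f, then g" *)
Notation "f ≫ g" := (comp f g) (at level 40, left associativity).

Section Basic.
Variable C : Category.

Definition mono {A B : C} (f : hom A B) : Prop :=
  forall W (a b : hom W A), a ≫ f = b ≫ f -> a = b.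

Definition is_terminal (T : C) : Prop :=
  forall X : C, exists f : hom X T, forall g : hom X T, g = f.

Definition is_initial (I0 : C) : Prop :=
  forall X : C, exists f : hom I0 X, forall g : hom I0 X, g = f.

Definition is_pullback {A B Z P : C} (f : hom A Z) (g : hom B Z)
    (p1 : hom P A) (p2 : hom P B) : Prop :=
  p1 ≫ f = p2 ≫ g /\
  forall Q (q1 : hom Q A) (q2 : hom Q B), q1 ≫ f = q2 ≫ g ->
    exists u : hom Q P, u ≫ p1 = q1 /\ u ≫ p2 = q2 /\
      forall v : hom Q P, v ≫ p1 = q1 -> v ≫ p2 = q2 -> v = u.

Definition is_product {A B P : C} (p1 : hom P A) (p2 : hom P B) : Prop :=
  forall Q (q1 : hom Q A) (q2 : hom Q B),
    exists u : hom Q P, u ≫ p1 = q1 /\ u ≫ p2 = q2 /\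
      forall v : hom Q P, v ≫ p1 = q1 -> v ≫ p2 = q2 -> v = u.

Definition is_coproduct {I : Type} (X : I -> C) (S : C)
    (inj : forall i, hom (X i) S) : Prop :=
  forall Y (f : forall i, hom (X i) Y),
    exists u : hom S Y, (forall i, inj i ≫ u = f i) /\
      forall v : hom S Y, (forall i, inj i ≫ v = f i) -> v = u.

(** Exponential [E] of [B] by [A] with evaluation [ev : E × A -> B]. *)
Definition is_exponential (A B E P : C) (e1 : hom P E) (e2 : hom P A)
    (ev : hom P B) : Prop :=
  is_product e1 e2 /\
  forall X Q (q1 : hom Q X) (q2 : hom Q A) (f : hom Q B), is_product q1 q2 ->
    exists u : hom X E,
      (exists m : hom Q P, m ≫ e1 = q1 ≫ u /\ m ≫ e2 = q2 /\ m ≫ ev = f) /\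
      forall u' : hom X E,
        (exists m : hom Q P, m ≫ e1 = q1 ≫ u' /\ m ≫ e2 = q2 /\ m ≫ ev = f) ->
        u' = u.

Definition is_subobject_classifier (T Om : C) (tru : hom T Om) : Prop :=
  is_terminal T /\
  forall S X (m : hom S X), mono m ->
    exists chi : hom X Om,
      (forall s : hom S T, is_pullback chi tru m s) /\
      forall chi' : hom X Om, (forall s : hom S T, is_pullback chi' tru m s) ->
        chi' = chi.
End Basic.
Arguments mono {C A B} f.
Arguments is_terminal {C} T.
Arguments is_initial {C} I0.
Arguments is_pullback {C A B Z P} f g p1 p2.
Arguments is_product {C A B P} p1 p2.
Arguments is_coproduct {C I} X {S} inj.
Arguments is_exponential {C A B E P} e1 e2 ev.
Arguments is_subobject_classifier {C T Om} tru.

(** * Grothendieck toposes (Giraud-style characterisation: an elementary topos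
    -- finite limits, cartesian closed, subobject classifier -- which moreover
    has all small coproducts and a small generating family). *)
Record Topos := {
  tcat :> Category;
  t_terminal : exists T : tcat, is_terminal T;
  t_pullbacks : forall (A B Z : tcat) (f : hom A Z) (g : hom B Z),
      exists P (p1 : hom P A) (p2 : hom P B), is_pullback f g p1 p2;
  t_exponentials : forall A B : tcat,
      exists E P (e1 : hom P E) (e2 : hom P A) (ev : hom P B),
        is_exponential e1 e2 ev;
  t_classifier : exists (T Om : tcat) (tru : hom T Om),
      is_subobject_classifier tru;
  t_coproducts : forall (I : Type) (X : I -> tcat),
      exists S (inj : forall i, hom (X i) S), is_coproduct X inj;
  t_generators : exists (G : Type) (g : G -> tcat),
      forall (X Y : tcat) (f h : hom X Y),
        (forall s (x : hom (g s) X), x ≫ f = x ≫ h) -> f = h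
}.

Section Connectedness.
Variable C : Topos.
Variable Z : C. (* the final object *)

(** A family of objects covers [C] (canonical topology): the family of
    (unique) maps [X i -> Z] is jointly epimorphic. *)
Definition covers {I : Type} (X : I -> C) : Prop :=
  forall Y (f g : hom Z Y),
    (forall i (h : hom (X i) Z), h ≫ f = h ≫ g) -> f = g.

Definition fiber_initial (A B : C) : Prop :=
  exists P (p1 : hom P A) (p2 : hom P B) (a : hom A Z) (b : hom B Z),
    is_pullback a b p1 p2 /\ is_initial P.

Definition pair_fam (S1 S2 : C) : bool -> C := fun b => if b then S1 else S2.

Definition connected : Prop :=
  ~ exists S1 S2 : C,
      ~ is_initial S1 /\ ~ is_initial S2 /\
      covers (pair_fam S1 S2) /\ fiber_initial S1 S2.

(** The same notions in the slice topos [C_X], unfolded (objects of [C_X]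
    are arrows [S -> X], its final object is [idm X]). *)
Definition slice_initial {X P : C} (p : hom P X) : Prop :=
  forall Y (y : hom Y X), exists u : hom P Y, u ≫ y = p /\
    forall v : hom P Y, v ≫ y = p -> v = u.

Definition slice_covers {X : C} {K : Type} {S : K -> C}
    (f : forall k, hom (S k) X) : Prop :=
  forall Y (y : hom Y X) (u v : hom X Y), u ≫ y = idm X -> v ≫ y = idm X ->
    (forall k, f k ≫ u = f k ≫ v) -> u = v.

Definition slice_product {X S1 S2 P : C} (f1 : hom S1 X) (f2 : hom S2 X)
    (p : hom P X) (q1 : hom P S1) (q2 : hom P S2) : Prop :=
  q1 ≫ f1 = p /\ q2 ≫ f2 = p /\
  forall Q (q : hom Q X) (r1 : hom Q S1) (r2 : hom Q S2),
    r1 ≫ f1 = q -> r2 ≫ f2 = q ->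
    exists u : hom Q P, u ≫ p = q /\ u ≫ q1 = r1 /\ u ≫ q2 = r2 /\
      forall v : hom Q P, v ≫ p = q -> v ≫ q1 = r1 -> v ≫ q2 = r2 -> v = u.

Definition slice_pair {X S1 S2 : C} (f1 : hom S1 X) (f2 : hom S2 X)
  : forall b : bool, hom (pair_fam S1 S2 b) X :=
  fun b => match b with true => f1 | false => f2 end.

Definition slice_connected (X : C) : Prop :=
  ~ exists S1 S2 (f1 : hom S1 X) (f2 : hom S2 X),
      ~ slice_initial f1 /\ ~ slice_initial f2 /\
      slice_covers (slice_pair f1 f2) /\
      exists P (p : hom P X) (q1 : hom P S1) (q2 : hom P S2),
        slice_product f1 f2 p q1 q2 /\ slice_initial p.

Definition connected_covering {I : Type} (X : I -> C) : Prop :=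
  covers X /\ forall i, slice_connected (X i).

Definition locally_connected : Prop :=
  forall (I : Type) (X : I -> C), covers X ->
    exists (J : Type) (Y : J -> C) (k : J -> I),
      connected_covering Y /\
      forall j, exists m : hom (Y j) (X (k j)), mono m.

Fixpoint chain {I : Type} (X : I -> C) (i : I) (l : list I) : Prop :=
  match l with
  | nil => True
  | j :: l' => ~ fiber_initial (X i) (X j) /\ chain X j l'
  end.

Definition is_path {I : Type} (X : I -> C) (p : list I) : Prop :=
  match p with
  | nil => False
  | i :: l => chain X i l
  end.
End Connectedness.
Arguments covers {C} Z {I} X.
Arguments fiber_initial {C} Z A B.
Arguments connected {C} Z.
Arguments slice_connected {C} X.
Arguments connected_covering {C} Z {I} X.
Arguments locally_connected {C} Z.
Arguments chain {C} Z {I} X i l.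
Arguments is_path {C} Z {I} X p.

(* Main.v *)
Require Import Defs.
From Stdlib Require Import List Classical.

Arguments comp_idl {c A B} f.
Arguments comp_idr {c A B} f.
Arguments comp_assoc {c A B D E} f g h.

Section Aux.
Context {C : Topos} {Z : C} (hZ : is_terminal Z).

Lemma term_eq {X : C} (f g : hom X Z) : f = g.
Proof. destruct (hZ X) as [t Ht]. rewrite (Ht f), (Ht g). reflexivity. Qed.

Lemma init_eq {O : C} (hO : is_initial O) {W} (f g : hom O W) : f = g.
Proof. destruct (hO W) as [t Ht]. rewrite (Ht f), (Ht g). reflexivity. Qed.

Lemma pb_prod {A B P : C} {a : hom A Z} {b : hom B Z} {p1 : hom P A} {p2 : hom P B} :
  is_pullback a b p1 p2 -> is_product p1 p2.
Proof.
  intros [_ U] Q q1 q2. apply U. apply term_eq.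
Qed.

Lemma pb_sym (A B D P : C) (a : hom A D) (b : hom B D) (p1 : hom P A) (p2 : hom P B) :
  is_pullback a b p1 p2 -> is_pullback b a p2 p1.
Proof.
  intros [c U]. split; [symmetry; exact c|].
  intros Q q1 q2 H. destruct (U Q q2 q1 (eq_sym H)) as [u [h1 [h2 hu]]].
  exists u. split; [exact h2|]. split; [exact h1|]. intros v v1 v2. apply hu; assumption.
Qed.

Lemma retract_init (A P : C) (s : hom A P) (r : hom P A) :
  s ≫ r = idm A -> is_initial P -> is_initial A.
Proof.
  intros H hP W. destruct (hP W) as [t Ht]. exists (s ≫ t). intros g.
  rewrite <- (comp_idl g), <- H, comp_assoc. rewrite (Ht (r ≫ g)). reflexivity.
Qed.

Lemma prod_init (P A Q : C) (q1 : hom Q P) (q2 : hom Q A) :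
  is_initial P -> is_product q1 q2 -> is_initial Q.
Proof.
  intros hP Hq W.
  destruct (t_exponentials C A W) as [E [P' [e1 [e2 [ev [Hprod Hexp]]]]]].
  destruct (hP E) as [z Hz].
  destruct (Hprod Q (q1 ≫ z) q2) as [m [m1 [m2 mu]]].
  exists (m ≫ ev). intros g.
  destruct (Hexp P Q q1 q2 g Hq) as [u [[m' [h1 [h2 h3]]] _]].
  rewrite (Hz u) in h1. rewrite (mu m' h1 h2) in h3. symmetry; exact h3.
Qed.

Lemma strict {A P : C} (f : hom A P) : is_initial P -> is_initial A.
Proof.
  intros hP.
  destruct (hZ P) as [zp _]. destruct (hZ A) as [za _].
  destruct (t_pullbacks C P A Z zp za) as [Q [q1 [q2 Hpb]]].
  pose proof (pb_prod Hpb) as Hq.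
  assert (hQ : is_initial Q) by (eapply prod_init; eassumption).
  destruct (Hq A f (idm A)) as [s [_ [s2 _]]].
  eapply retract_init; eassumption.
Qed.

Lemma exists_init : exists O : C, is_initial O.
Proof.
  destruct (@t_coproducts C Empty_set (fun e => match e with end)) as [O [inj H]].
  exists O. intros Y. destruct (H Y (fun e => match e with end)) as [u [_ hu]].
  exists u. intros v. apply hu. intros [].
Qed.

Definition cov (A : C) (R : forall P : C, hom P A -> Prop) : Prop :=
  forall W (f g : hom A W), (forall P (p : hom P A), R P p -> p ≫ f = p ≫ g) -> f = g.

Lemma L2 {I : Type} {X : I -> C} : covers Z X -> forall {A : C} (a : hom A Z),
  cov A (fun P p => exists i (p1 : hom P (X i)) (g : hom (X i) Z), is_pullback g a p1 p).
Proof.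
  intros hX A a W f h H.
  destruct (t_exponentials C A W) as [E [P' [e1 [e2 [ev [Hprod Hexp]]]]]].
  assert (Hpa : is_product a (idm A)).
  { intros Q q1 q2. exists q2. split; [apply term_eq|]. split; [apply comp_idr|].
    intros v _ hv. rewrite comp_idr in hv. exact hv. }
  destruct (Hexp Z A a (idm A) f Hpa) as [uf [[mf [f1 [f2 f3]]] _]].
  destruct (Hexp Z A a (idm A) h Hpa) as [uh [[mh [g1 [g2 g3]]] _]].
  assert (Heq : uf = uh).
  { apply hX. intros i h'.
    destruct (t_pullbacks C (X i) A Z h' a) as [Pi [p1 [p2 Hpb]]].
    pose proof (pb_prod Hpb) as Hq.
    destruct (Hexp (X i) Pi p1 p2 (p2 ≫ f) Hq) as [u [_ hu]].
    assert (Hm : p1 ≫ h' = p2 ≫ a) by apply term_eq.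
    rewrite (hu (h' ≫ uf)), (hu (h' ≫ uh)); [reflexivity| |].
    - exists (p2 ≫ mh). split; [|split].
      + rewrite comp_assoc, g1, <- comp_assoc, <- Hm, comp_assoc. reflexivity.
      + rewrite comp_assoc, g2, comp_idr. reflexivity.
      + rewrite comp_assoc, g3. symmetry. apply H. exists i, p1, h'. exact Hpb.
    - exists (p2 ≫ mf). split; [|split].
      + rewrite comp_assoc, f1, <- comp_assoc, <- Hm, comp_assoc. reflexivity.
      + rewrite comp_assoc, f2, comp_idr. reflexivity.
      + rewrite comp_assoc, f3. reflexivity. }
  subst uh.
  destruct (Hprod A (a ≫ uf) (idm A)) as [m [_ [_ mu]]].
  rewrite <- f3, <- g3, (mu mf f1 f2), (mu mh g1 g2). reflexivity.
Qed.

  Lemma L3 {A : C} {R : forall P : C, hom P A -> Prop} :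
  cov A R -> (forall P p, R P p -> is_initial P) -> is_initial A.
Proof.
  intros hc hR.
  destruct exists_init as [O hO]. destruct (hO A) as [o _].
  destruct (t_classifier C) as [T [Om [tru [hT Hcl]]]].
  assert (mo : mono o).
  { intros W a b _. apply (init_eq (strict a hO)). }
  destruct (Hcl O A o mo) as [chi [Hpb _]].
  destruct (hT A) as [tA _]. destruct (hT O) as [tO _].
  assert (Hc : chi = tA ≫ tru).
  { apply hc. intros P p HP. apply (init_eq (hR P p HP)). }
  destruct (Hpb tO) as [_ U].
  destruct (U A (idm A) tA) as [u _].
  { rewrite comp_idl. exact Hc. }
  exact (strict u hO).
Qed.

Lemma FI_strict {A B : C} : fiber_initial Z A B ->
  forall {Q} (q1 : hom Q A) (q2 : hom Q B), is_initial Q.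
Proof.
  intros [P [p1 [p2 [a [b [[_ U] hP]]]]]] Q q1 q2.
  destruct (U Q q1 q2 (term_eq _ _)) as [u _]. exact (strict u hP).
Qed.

Lemma last_cons {I : Type} (l : list I) : forall j i, last (j :: l) i = last l j.
Proof.
  induction l as [|x l IH]; intros j i; [reflexivity|].
  change (last (x :: l) i = last (x :: l) j). rewrite !IH. reflexivity.
Qed.

Section Back.
Context {S1 S2 : C} (Hc : covers Z (@pair_fam C S1 S2)) (Hfi : fiber_initial Z S1 S2).

Lemma dich {Xj : C} : slice_connected Xj -> fiber_initial Z Xj S1 \/ fiber_initial Z Xj S2.
Proof.
  intros Hsc.
  destruct (classic (fiber_initial Z Xj S1)) as [h1|n1]; [left; exact h1|].
  destruct (classic (fiber_initial Z Xj S2)) as [h2|n2]; [right; exact h2|].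
  exfalso. apply Hsc.
  destruct (hZ Xj) as [xj _]. destruct (hZ S1) as [s1 _]. destruct (hZ S2) as [s2 _].
  destruct (t_pullbacks C Xj S1 Z xj s1) as [P1 [a1 [b1 Hp1]]].
  destruct (t_pullbacks C Xj S2 Z xj s2) as [P2 [a2 [b2 Hp2]]].
  destruct exists_init as [O hO]. destruct (hO Xj) as [oX _].
  exists P1, P2, a1, a2. split; [|split; [|split]].
  - intro H. apply n1. exists P1, a1, b1, xj, s1. split; [exact Hp1|].
    destruct (H O oX) as [u _]. exact (strict u hO).
  - intro H. apply n2. exists P2, a2, b2, xj, s2. split; [exact Hp2|].
    destruct (H O oX) as [u _]. exact (strict u hO).
  - intros Y y u v _ _ Hk. apply (L2 Hc xj).
    intros P p [b [p1 [g Hpb]]]. destruct b.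
    + destruct Hp1 as [_ U]. destruct (U P p p1 (term_eq _ _)) as [w [hw _]].
      rewrite <- hw, !comp_assoc. f_equal. exact (Hk true).
    + destruct Hp2 as [_ U]. destruct (U P p p1 (term_eq _ _)) as [w [hw _]].
      rewrite <- hw, !comp_assoc. f_equal. exact (Hk false).
  - destruct (t_pullbacks C P1 P2 Xj a1 a2) as [P [r1 [r2 [cm U]]]].
    exists P, (r1 ≫ a1), r1, r2. split.
    + split; [reflexivity|]. split; [symmetry; exact cm|].
      intros Q q t1 t2 H1 H2.
      destruct (U Q t1 t2 (eq_trans H1 (eq_sym H2))) as [u [hu1 [hu2 hun]]].
      exists u. split; [rewrite <- comp_assoc, hu1; exact H1|].
      split; [exact hu1|]. split; [exact hu2|].
      intros v _ hv1 hv2. apply hun; assumption.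
    + assert (hP : is_initial P) by exact (FI_strict Hfi (r1 ≫ b1) (r2 ≫ b2)).
      intros Y y. destruct (hP Y) as [u hu]. exists u. split.
      * apply (init_eq hP).
      * intros v _. apply hu.
Qed.

Lemma prop {Xi Xj : C} : slice_connected Xj -> fiber_initial Z Xi S2 ->
  ~ fiber_initial Z Xi Xj -> fiber_initial Z Xj S2.
Proof.
  intros Hsc Hi Hn. destruct (dich Hsc) as [h1|h2]; [|exact h2].
  exfalso. apply Hn.
  destruct (hZ Xi) as [xi _]. destruct (hZ Xj) as [xj _].
  destruct (t_pullbacks C Xi Xj Z xi xj) as [Q [qa [qb Hpb]]].
  exists Q, qa, qb, xi, xj. split; [exact Hpb|].
  apply (L3 (L2 Hc (qa ≫ xi))).
  intros P p [b [p1 [g _]]]. destruct b.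
  - exact (FI_strict h1 (p ≫ qb) p1).
  - exact (FI_strict Hi (p ≫ qa) p1).
Qed.

Lemma chain_prop {I : Type} {X : I -> C} (hs : forall i, slice_connected (X i)) :
  forall l i, chain Z X i l -> fiber_initial Z (X i) S2 -> fiber_initial Z (X (last l i)) S2.
Proof.
  induction l as [|j l IH]; intros i Hch Hi; [exact Hi|].
  rewrite last_cons. destruct Hch as [Hn Hch].
  apply IH; [exact Hch|]. exact (prop (hs j) Hi Hn).
Qed.
End Back.
End Aux.

Theorem proposition1p9 (C : Topos) (Z : C) (hZ : is_terminal Z)
    (hloc : locally_connected Z) :
  connected Z <->
  exists (I : Type) (X : I -> C),
    connected_covering Z X /\
    forall (Y : C) (i : I), ~ is_initial Y ->
      exists l : list I,
        is_path Z X (i :: l) /\ ~ fiber_initial Z (X (last l i)) Y.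
Proof.
  split.
  - intros Hconn. exists unit, (fun _ => Z). split; [split|].
    + intros Y f g H. specialize (H tt (idm Z)). rewrite !comp_idl in H. exact H.
    + intros _ [S1 [S2 [f1 [f2 [n1 [n2 [Hsc [P [p [q1 [q2 [Hsp Hsi]]]]]]]]]]]].
      apply Hconn. exists S1, S2. split; [|split; [|split]].
      * intro HS. apply n1. intros Y y. destruct (HS Y) as [u hu]. exists u.
        split; [apply (term_eq hZ)|]. intros v _. apply hu.
      * intro HS. apply n2. intros Y y. destruct (HS Y) as [u hu]. exists u.
        split; [apply (term_eq hZ)|]. intros v _. apply hu.
      * intros Y f g H. destruct (hZ Y) as [y _].
        apply (Hsc Y y f g (term_eq hZ _ _) (term_eq hZ _ _)).
        intros [|]; apply H.
      * exists P, q1, q2, f1, f2. destruct Hsp as [e1 [e2 U]]. split.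
        -- split; [rewrite e1, e2; reflexivity|].
           intros Q r1 r2 H.
           destruct (U Q (r1 ≫ f1) r1 r2 eq_refl (eq_sym H)) as [u [_ [h1 [h2 hu]]]].
           exists u. split; [exact h1|]. split; [exact h2|].
           intros v hv1 hv2. apply hu; [|exact hv1|exact hv2].
           rewrite <- e1, <- comp_assoc, hv1. reflexivity.
        -- destruct (@exists_init C) as [O hO]. destruct (hO Z) as [oZ _].
           destruct (Hsi O oZ) as [u _]. exact (strict hZ u hO).
    + intros Y i nY. exists nil. split; [exact I|].
      intro H. apply nY. destruct (hZ Y) as [y _].
      exact (FI_strict hZ H y (idm Y)).
  - intros [I [X [[Hcov Hsc] Hpath]]] [S1 [S2 [n1 [n2 [Hc Hfi]]]]].
    assert (Hex : exists i, fiber_initial Z (X i) S2).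
    { apply NNPP. intro Hne. apply n1. destruct (hZ S1) as [s1 _].
      apply (L3 hZ (L2 hZ Hcov s1)).
      intros P p [i [p1 [g _]]].
      destruct (dich hZ Hc Hfi (Hsc i)) as [h1|h2].
      - exact (FI_strict hZ h1 p1 p).
      - exfalso. apply Hne. exists i. exact h2. }
    destruct Hex as [i Hi].
    destruct (Hpath S2 i n2) as [l [Hp Hnf]].
    apply Hnf. exact (chain_prop hZ Hc Hfi Hsc l i Hp Hi).
Qed.
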